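(* Let $D$ be an integral domain with quotient field $K$ and $\mathcal S$ a multiplicative subset of $D[X]$ ($0\notin\mathcal S$), and let $\circlearrowleft_{\mathcal S}$ be the semistar operation $E\mapsto ED[X]_{\mathcal S}\cap K$ on $D$. Then: (f) $\circlearrowleft_{\mathcal S}$ is a (semi)star operation on $D$ (i.e. $D^{\circlearrowleft_{\mathcal S}}=D$) if and only if $\mathcal S\subseteq\mathcal N^{v_D}$, if and only if $D=\bigcap\{D_P\mid P\in\boldsymbol\nabla(\mathcal S)\}$; (g) the map $\mathcal S\mapsto\circlearrowleft_{\mathcal S}$ is a bijection between the set of extended saturated multiplicative subsets of $D[X]$ and the set of stable semistar operations of finite type on $D$; it restricts to a bijection between the extended saturated multiplicative subsets of $D[X]$ contained in $\mathcal N^{v_D}$ and the stable (semi)star operations of finite type on $D$; (h) if $\mathcal S$ is extended saturated, then $\mathrm{Na}(D,v_D)=D[X]_{\mathcal S}$ if and only if $\mathcal S=\mathcal N^{v_D}$.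
   Context: $\overline{\boldsymbol F}(D)$ is the set of nonzero $D$-submodules of $K$. A semistar operation on $D$ is a map $\star:\overline{\boldsymbol F}(D)\to\overline{\boldsymbol F}(D)$ with $(xE)^\star=xE^\star$ for $0\ne x\in K$, $E\subseteq F\Rightarrow E^\star\subseteq F^\star$, $E\subseteq E^\star$ and $(E^\star)^\star=E^\star$; it is a (semi)star operation if $D^\star=D$. $\star$ is of finite type if $E^\star=\bigcup\{F^\star\mid F\subseteq E,\ F$ a nonzero finitely generated fractional ideal$\}$ for all $E$, and stable if $(E\cap F)^\star=E^\star\cap F^\star$. $v_D$ is the operation $E^{v}=(D:(D:E))$. For $f\in K[X]$, $\mathrm{c}_D(f)$ is the fractional ideal generated by its coefficients; $\mathcal N^\star=\{g\in D[X]\mid g\ne0,\ \mathrm{c}_D(g)^\star=D^\star\}$ and $\mathrm{Na}(D,\star)=D[X]_{\mathcal N^\star}$. For a multiplicative set $\mathcal S\subseteq D[X]$: its extended saturation is $\mathcal S^\sharp=D[X]\setminus\bigcup\{P[X]\mid P\in\mathrm{Spec}(D),\ P[X]\cap\mathcal S=\emptyset\}$; $\mathcal S$ is extended saturated if $\mathcal S=\mathcal S^\sharp$; $\boldsymbol\Delta(\mathcal S)=\{P\in\mathrm{Spec}(D)\mid P[X]\cap\mathcal S=\emptyset\}$ and $\boldsymbol\nabla(\mathcal S)$ is the set of maximal elements of $\boldsymbol\Delta(\mathcal S)$. *)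

(* Defs.v *)
From HB Require Import structures.
From mathcomp Require Import all_boot all_order all_algebra.
From mathcomp Require Import fraction.
Set Implicit Arguments. Unset Strict Implicit. Unset Printing Implicit Defensive.
Import GRing.Theory.
Local Open Scope ring_scope.

Section SemistarDefs.
Variable K : fieldType.
Variable D : K -> Prop.

Definition sub (E F : K -> Prop) := forall x, E x -> F x.
Definition seteq (E F : K -> Prop) := forall x, E x <-> F x.
Definition setI (E F : K -> Prop) : K -> Prop := fun x => E x /\ F x.
Definition scale (a : K) (E : K -> Prop) : K -> Prop :=
  fun y => exists e, E e /\ y = a * e.

(* D is an integral domain (subring of the field K) with quotient field K *)
Definition domain_with_qf :=
  [/\ D 0, D 1, (forall x y, D x -> D y -> D (x - y)),
      (forall x y, D x -> D y -> D (x * y)) &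
      (forall x, exists a b, [/\ D a, D b, b != 0 & x = a / b])].

Definition Fbar (E : K -> Prop) :=
  [/\ (exists x, E x /\ x != 0), E 0,
      (forall x y, E x -> E y -> E (x + y)) &
      (forall d x, D d -> E x -> E (d * x))].

Definition span (s : seq K) : K -> Prop :=
  fun x => exists d : nat -> K, (forall i, D (d i)) /\
           x = \sum_(i < size s) d i * s`_i.

Definition fg_nonzero (F : K -> Prop) :=
  exists s : seq K, seteq F (span s) /\ has (fun a => a != 0) s.

Definition semistar (star : (K -> Prop) -> (K -> Prop)) :=
  [/\ (forall E, Fbar E -> Fbar (star E)),
      (forall x E, x != 0 -> Fbar E -> seteq (star (scale x E)) (scale x (star E))),
      (forall E F, Fbar E -> Fbar F -> sub E F -> sub (star E) (star F)),
      (forall E, Fbar E -> sub E (star E)) &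
      (forall E, Fbar E -> seteq (star (star E)) (star E))].

Definition semistar_star (star : (K -> Prop) -> (K -> Prop)) :=
  semistar star /\ seteq (star D) D.

Definition finite_type (star : (K -> Prop) -> (K -> Prop)) :=
  forall E, Fbar E ->
    seteq (star E) (fun x => exists F, [/\ fg_nonzero F, sub F E & star F x]).

Definition stable (star : (K -> Prop) -> (K -> Prop)) :=
  forall E F, Fbar E -> Fbar F -> seteq (star (setI E F)) (setI (star E) (star F)).

Definition star_eq (s1 s2 : (K -> Prop) -> (K -> Prop)) :=
  forall E, Fbar E -> seteq (s1 E) (s2 E).

Definition colon (E : K -> Prop) : K -> Prop := fun x => forall e, E e -> D (x * e).
Definition vop (E : K -> Prop) : K -> Prop := colon (colon E).

Definition DX (g : {poly K}) := forall i, D g`_i.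
Definition content (g : {poly K}) : K -> Prop := span (polyseq g).

Definition Nstar (star : (K -> Prop) -> (K -> Prop)) : {poly K} -> Prop :=
  fun g => [/\ DX g, g != 0 & seteq (star (content g)) (star D)].

Definition multiplicative (S : {poly K} -> Prop) :=
  [/\ (forall g, S g -> DX g), S 1,
      (forall f g, S f -> S g -> S (f * g)) & ~ S 0].

Definition psub (S T : {poly K} -> Prop) := forall g, S g -> T g.
Definition pseteq (S T : {poly K} -> Prop) := forall g, S g <-> T g.

Definition prime_ideal (P : K -> Prop) :=
  [/\ sub P D, P 0, (forall x y, P x -> P y -> P (x + y)),
      (forall d x, D d -> P x -> P (d * x)) &
      (~ P 1 /\ (forall x y, D x -> D y -> P (x * y) -> P x \/ P y))].

Definition PX (P : K -> Prop) (g : {poly K}) := forall i, P g`_i.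

Definition Delta (S : {poly K} -> Prop) (P : K -> Prop) :=
  prime_ideal P /\ forall g, S g -> ~ PX P g.

Definition Nabla (S : {poly K} -> Prop) (P : K -> Prop) :=
  Delta S P /\ forall Q, Delta S Q -> sub P Q -> sub Q P.

Definition ext_saturation (S : {poly K} -> Prop) : {poly K} -> Prop :=
  fun f => DX f /\ forall P, Delta S P -> ~ PX P f.

Definition ext_saturated (S : {poly K} -> Prop) := pseteq S (ext_saturation S).

Definition DP (P : K -> Prop) : K -> Prop :=
  fun x => exists a b, [/\ D a, D b, ~ P b & x = a / b].

(* D[X]_S inside the field of rational functions K(X) *)
Definition tofr (p : {poly K}) : {fraction {poly K}} := FracField.tofrac p.
Definition embK (x : K) : {fraction {poly K}} := tofr (x%:P).

Definition locS (S : {poly K} -> Prop) : {fraction {poly K}} -> Prop :=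
  fun u => exists f g, [/\ DX f, S g & u = tofr f / tofr g].

(* E D[X]_S : D[X]_S-submodule of K(X) generated by E *)
Definition EDXS (S : {poly K} -> Prop) (E : K -> Prop) : {fraction {poly K}} -> Prop :=
  fun z => exists (n : nat) (e : nat -> K) (u : nat -> {fraction {poly K}}),
    (forall i, (i < n)%N -> E (e i) /\ locS S (u i)) /\
    z = \sum_(i < n) embK (e i) * u i.

(* the operation E |-> E D[X]_S \cap K *)
Definition circ (S : {poly K} -> Prop) (E : K -> Prop) : K -> Prop :=
  fun x => EDXS S E (embK x).

Definition Na (star : (K -> Prop) -> (K -> Prop)) := locS (Nstar star).

End SemistarDefs.

(* Main.v *)
Require Import Defs.
From HB Require Import structures.
From mathcomp Require Import all_boot all_order all_algebra fraction.
From Stdlib Require Import Classical ClassicalEpsilon FunctionalExtensionality PropExtensionality.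
Set Implicit Arguments. Unset Strict Implicit.

Section Zorn.
Variable T : Type.
Definition zsub (A B : T -> Prop) := forall x, A x -> B x.
Definition zchain (C : (T -> Prop) -> Prop) :=
  forall a b, C a -> C b -> zsub a b \/ zsub b a.
Definition zunion (C : (T -> Prop) -> Prop) : T -> Prop :=
  fun x => exists c, C c /\ c x.

Lemma zext (A B : T -> Prop) : zsub A B -> zsub B A -> A = B.
Proof.
move=> h1 h2; apply: functional_extensionality => x.
apply: propositional_extensionality; split; [exact: h1|exact: h2].
Qed.

Variable F : (T -> Prop) -> Prop.
Variable J0 : T -> Prop.
Hypothesis FJ0 : F J0.
Hypothesis Fchain : forall C, (forall c, C c -> F c) -> zchain C ->
  (exists c, C c) -> F (zunion C).

Definition F0 J := F J /\ zsub J0 J.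
Definition bigger J J' := F0 J' /\ zsub J J' /\ ~ zsub J' J.

Definition fz (J : T -> Prop) : T -> Prop :=
  match excluded_middle_informative (exists J', bigger J J') with
  | left h => proj1_sig (constructive_indefinite_description _ h)
  | right _ => J end.

Lemma fz_infl J : zsub J (fz J).
Proof.
rewrite /fz; case: excluded_middle_informative => [h|_ //].
exact: (proj1 (proj2 (proj2_sig (constructive_indefinite_description _ h)))).
Qed.

Definition zsup (C : (T -> Prop) -> Prop) : T -> Prop :=
  fun x => J0 x \/ exists c, C c /\ c x.

Inductive Tw : (T -> Prop) -> Prop :=
| tw_f J : Tw J -> Tw (fz J)
| tw_sup C : (forall c, C c -> Tw c) -> Tw (zsup C).

Lemma tw_J0 c : Tw c -> zsub J0 c.
Proof.
move=> Tc; elim: Tc => [J _ IH|C _ _] x h; first by apply: fz_infl; apply: IH.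
by left.
Qed.

Definition Hc c2 := forall c3, Tw c3 -> zsub c3 c2 -> zsub c2 c3 \/ zsub (fz c3) c2.

Lemma lemA c2 : Tw c2 -> Hc c2 -> forall c1, Tw c1 -> zsub (fz c2) c1 \/ zsub c1 c2.
Proof.
move=> Tc2 H c1 Tc1; elim: Tc1 => [c3 Tc3 IH|C TC IH].
- case: IH => [h|h].
    by left=> x /h; apply: fz_infl.
  case: (H c3 Tc3 h) => [h'|h'].
    by left; rewrite (zext h h').
  by right.
- case: (classic (exists c, C c /\ zsub (fz c2) c)) => [[c [Cc hc]]|hn].
    by left=> x /hc hx; right; exists c.
  right=> x [hx|[c [Cc hx]]]; first by apply: tw_J0 Tc2 _ hx.
  case: (IH c Cc) => [h|h]; last by apply: h.
  by case: hn; exists c.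
Qed.

Lemma lemB c2 : Tw c2 -> Hc c2.
Proof.
move=> Tc2; elim: Tc2 => [c3 Tc3 IH|C TC IH].
- move=> c1 Tc1 h.
  case: (lemA Tc3 IH Tc1) => [h1|h1].
    by left.
  case: (IH c1 Tc1 h1) => [h2|h2].
    by right; rewrite (zext h1 h2).
  by right=> x /h2; apply: fz_infl.
- move=> c1 Tc1 h.
  case: (classic (exists c, C c /\ ~ zsub c c1)) => [[c [Cc hc]]|hn].
    case: (lemA (TC c Cc) (IH c Cc) Tc1) => [h1|h1].
      by case: hc => x /fz_infl /h1.
    case: (IH c Cc c1 Tc1 h1) => [h2|h2]; first by case: hc.
    by right=> x /h2 hx; right; exists c.
  left=> x [hx|[c [Cc hx]]]; first by apply: tw_J0 Tc1 _ hx.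
  apply: NNPP => hx'; apply: hn; exists c; split=> //.
  by move=> hs; apply: hx'; apply: hs.
Qed.

Lemma tw_total c1 c2 : Tw c1 -> Tw c2 -> zsub c1 c2 \/ zsub c2 c1.
Proof.
move=> T1 T2; case: (lemA T2 (lemB T2) T1) => [h|h]; last by left.
by right=> x /fz_infl /h.
Qed.

Lemma fz_F0 J : F0 J -> F0 (fz J).
Proof.
move=> hJ; rewrite /fz; case: excluded_middle_informative => [h|_ //].
exact: (proj1 (proj2_sig (constructive_indefinite_description _ h))).
Qed.

Lemma tw_F0 c0 : Tw c0 -> F0 c0.
Proof.
move=> Tc; elim: Tc => [J _ IH|C TC IH]; first exact: fz_F0.
pose C' := fun c => C c \/ c = J0.
have -> : zsup C = zunion C'.
  apply: zext => x.
    by case=> [h|[c [Cc h]]]; [exists J0; split=> //; right | exists c; split=> //; left].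
  by case=> c [[Cc|->] h]; [right; exists c | left].
split; last by move=> x hx; exists J0; split=> //; right.
apply: Fchain.
- by move=> c [/IH []|->].
- move=> a b [Ca|->] [Cb|->].
  + exact: tw_total (TC a Ca) (TC b Cb).
  + by right; case: (IH a Ca).
  + by left; case: (IH b Cb).
  + by left.
- by exists J0; right.
Qed.

Lemma zorn : exists M, F M /\ zsub J0 M /\ forall J, F J -> zsub M J -> zsub J M.
Proof.
pose m := zsup Tw.
have Tm : Tw m by apply: tw_sup.
have [Fm J0m] := tw_F0 Tm.
exists m; split=> //; split=> // J FJ hmJ.
apply: NNPP => hn.
have hb : exists J', bigger m J'.
  exists J; split; first by split=> // x /J0m /hmJ.
  by split.
have Tfm : Tw (fz m) by apply: tw_f.
have hfm : zsub (fz m) m by move=> x hx; right; exists (fz m).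
move: hfm; rewrite /fz; case: excluded_middle_informative => [h|//].
exact: (proj2 (proj2 (proj2_sig (constructive_indefinite_description _ h)))).
Qed.
End Zorn.

Set Implicit Arguments. Unset Strict Implicit. Unset Printing Implicit Defensive.
Import GRing.Theory.
Local Notation span := Defs.span.
Local Notation setI := Defs.setI.
Local Notation multiplicative := Defs.multiplicative.
Local Open Scope ring_scope.

Lemma minimal (Q : nat -> Prop) n : Q n -> exists m, Q m /\ forall k, (k < m)%N -> ~ Q k.
Proof.
move=> Qn; apply: NNPP => H.
suff: forall m k, (k <= m)%N -> ~ Q k by move/(_ n n (leqnn n)).
elim=> [|m IH] k hk Qk.
  apply: H; exists k; split=> // j; move: hk; rewrite leqn0 => /eqP ->; by [].
apply: H; exists k; split=> // j hj; apply: IH; rewrite -ltnS; exact: leq_trans hj hk.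
Qed.

Section Basics.
Variable K : fieldType.
Variable D : K -> Prop.
Hypothesis hD : domain_with_qf D.

Lemma D0 : D 0. Proof. by case: hD. Qed.
Lemma D1 : D 1. Proof. by case: hD. Qed.
Lemma DB x y : D x -> D y -> D (x - y). Proof. by case: hD => _ _ h _ _; apply: h. Qed.
Lemma DM x y : D x -> D y -> D (x * y). Proof. by case: hD => _ _ _ h _; apply: h. Qed.
Lemma DN x : D x -> D (- x). Proof. by move=> h; rewrite -sub0r; apply: DB => //; apply: D0. Qed.
Lemma DD x y : D x -> D y -> D (x + y).
Proof. by move=> hx hy; rewrite -[y]opprK; apply: DB => //; apply: DN. Qed.
Lemma Dnat (b : bool) : D b%:R. Proof. by case: b; [apply: D1 | apply: D0]. Qed.

Definition modE (E : K -> Prop) :=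
  [/\ E 0, (forall x y, E x -> E y -> E (x + y)) & (forall d x, D d -> E x -> E (d * x))].

Lemma modE_D : modE D.
Proof. split; [exact: D0 | exact: DD | move=> d x; exact: DM]. Qed.

Lemma modE_Fbar E : Fbar D E -> modE E.
Proof. by case. Qed.

Lemma modE_prime P : prime_ideal D P -> modE P.
Proof. by case. Qed.

Lemma modE_ext E F : modE E -> seteq E F -> modE F.
Proof.
move=> [h0 h1 h2] e; split; first by apply/e.
- by move=> x y /e hx /e hy; apply/e; apply: h1.
- by move=> d x hd /e hx; apply/e; apply: h2.
Qed.

Lemma modE_opp E x : modE E -> E x -> E (- x).
Proof. by move=> [_ _ h] hx; rewrite -mulN1r; apply: h => //; apply: DN; apply: D1. Qed.

Lemma modE_sub E x y : modE E -> E x -> E y -> E (x - y).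
Proof. by move=> hE hx hy; case: (hE) => _ h _; apply: h => //; apply: modE_opp. Qed.

Lemma modE_sum E n (F : 'I_n -> K) : modE E -> (forall i, E (F i)) -> E (\sum_i F i).
Proof. by move=> [h0 h1 _] hF; apply: (big_ind E) => //. Qed.

Lemma modE_mulr E d x : modE E -> D d -> E x -> E (x * d).
Proof. by move=> [_ _ h] hd hx; rewrite mulrC; apply: h. Qed.

Lemma fbar_of E : modE E -> (exists x, E x /\ x != 0) -> Fbar D E.
Proof. by move=> [h0 h1 h2] hx; split. Qed.

Lemma span_mod s : modE (span D s).
Proof.
split.
- exists (fun _ => 0); split=> [i|]; first exact: D0.
  by rewrite big1 // => i _; rewrite mul0r.
- move=> x y [d1 [hd1 ->]] [d2 [hd2 ->]]; exists (fun i => d1 i + d2 i); split.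
    by move=> i; apply: DD.
  by rewrite -big_split /=; apply: eq_bigr => i _; rewrite mulrDl.
- move=> c x hc [d1 [hd1 ->]]; exists (fun i => c * d1 i); split.
    by move=> i; apply: DM.
  by rewrite mulr_sumr; apply: eq_bigr => i _; rewrite mulrA.
Qed.

Lemma span_nth s i : (i < size s)%N -> span D s s`_i.
Proof.
move=> hi; exists (fun j => (j == i)%:R); split=> [j|]; first exact: Dnat.
rewrite (bigD1 (Ordinal hi)) //= eqxx mul1r big1 ?addr0 // => j hj.
have -> : (nat_of_ord j == i) = false.
  by apply/negbTE; apply: contra hj => /eqP h; apply/eqP; apply: val_inj.
by rewrite mul0r.
Qed.

Lemma span_sub s E : modE E -> (forall i, (i < size s)%N -> E s`_i) -> sub (span D s) E.
Proof.
move=> hE hs x [d [hd ->]]; apply: modE_sum => // i.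
by case: hE => _ _ h; apply: h => //; apply: hs.
Qed.

Lemma span_nz s : has (fun a => a != 0) s -> exists x, span D s x /\ x != 0.
Proof.
move/(has_nthP 0) => [i hi nz]; exists s`_i; split=> //; exact: span_nth.
Qed.

Lemma Fbar_span s : has (fun a => a != 0) s -> Fbar D (span D s).
Proof. by move=> h; apply: fbar_of; [apply: span_mod | apply: span_nz]. Qed.

Lemma Fbar_fg F : fg_nonzero D F -> Fbar D F.
Proof.
move=> [s [e h]]; have := Fbar_span h; case=> [[x [hx nz]] h0 h1 h2]; split.
- by exists x; split=> //; apply/e.
- by apply/e.
- by move=> x' y /e hx' /e hy; apply/e; apply: h1.
- by move=> d x' hd /e hx'; apply/e; apply: h2.
Qed.

Lemma content_coef (g : {poly K}) k : content D g g`_k.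
Proof.
case: (ltnP k (size g)) => hk; first exact: span_nth.
by rewrite nth_default //; case: (span_mod (polyseq g)).
Qed.

Lemma colon_content (g : {poly K}) z : colon D (content D g) z <-> forall k, D (z * g`_k).
Proof.
split; first by move=> h k; apply: h; apply: content_coef.
move=> h e he.
have hE : modE (fun e => D (z * e)).
  split; first by rewrite mulr0; apply: D0.
    by move=> x y hx hy; rewrite mulrDr; apply: DD.
  by move=> d x hd hx; rewrite mulrCA; apply: DM.
exact: (span_sub hE (fun i _ => h i)).
Qed.

Lemma coefM_mod E x (f h : {poly K}) : modE E -> (forall a b, E (x * f`_a * h`_b)) ->
  forall m, E (x * (f * h)`_m).
Proof.
move=> hE hab m; rewrite coefM mulr_sumr; apply: modE_sum => // i.
by rewrite mulrA.
Qed.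

Lemma DX_mul (f g : {poly K}) : DX D f -> DX D g -> DX D (f * g).
Proof.
move=> hf hg m; rewrite -[_`_m]mul1r; apply: (coefM_mod modE_D) => a b.
by rewrite mul1r; apply: DM.
Qed.

Lemma DX1 : DX D 1.
Proof. by move=> i; rewrite coef1; apply: Dnat. Qed.

Lemma DXXn n : DX D 'X^n.
Proof. by move=> i; rewrite coefXn; apply: Dnat. Qed.

Lemma PX_mulr P (f h : {poly K}) : modE P -> PX P f -> DX D h -> PX P (f * h).
Proof.
move=> hP hf hh m; rewrite -[_`_m]mul1r; apply: (coefM_mod hP) => a b.
by rewrite mul1r; apply: modE_mulr.
Qed.

Lemma prime_sub P x : prime_ideal D P -> P x -> D x.
Proof. by case=> h _ _ _ _; apply: h. Qed.

Lemma gauss P (f g : {poly K}) : prime_ideal D P -> DX D f -> DX D g -> PX P (f * g) ->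
  PX P f \/ PX P g.
Proof.
move=> hP hf hg hfg; apply: NNPP => hn.
have [nf ng] : ~ PX P f /\ ~ PX P g by split=> h; apply: hn; [left|right].
have [i0 nfi] := not_all_ex_not _ _ nf.
have [j0 ngj] := not_all_ex_not _ _ ng.
have [i [fi mi]] := @minimal (fun i => ~ P f`_i) i0 nfi.
have [j [gj mj]] := @minimal (fun j => ~ P g`_j) j0 ngj.
have hm : modE P := modE_prime hP.
have hi : (i < (i + j).+1)%N by rewrite ltnS leq_addr.
have := hfg (i + j); rewrite coefM (bigD1 (Ordinal hi)) //= addKn => hs.
have hr : P (\sum_(a < (i + j).+1 | a != Ordinal hi) f`_a * g`_(i + j - a)).
  case: (hm) => h0 h1 _; apply: (big_ind P) => // a ha.
  have ha' : (nat_of_ord a != i) by apply: contra ha => /eqP h; apply/eqP; apply: val_inj.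
  case: (ltngtP a i) => [lt|gt|eq]; last by rewrite eq eqxx in ha'.
    apply: (modE_mulr hm (hg _)).
    by apply: NNPP; apply: mi.
  rewrite mulrC; apply: (modE_mulr hm (hf _)).
  apply: NNPP; apply: mj; rewrite ltn_subLR; last by rewrite -ltnS.
  by rewrite ltn_add2r.
have : P (f`_i * g`_j).
  have -> : f`_i * g`_j = (f`_i * g`_j + \sum_(a < (i + j).+1 | a != Ordinal hi) f`_a * g`_(i + j - a)) - \sum_(a < (i + j).+1 | a != Ordinal hi) f`_a * g`_(i + j - a).
    by rewrite addrK.
  exact: modE_sub.
case: hP => _ _ _ _ [_ hpr] /(hpr _ _ (hf i) (hg j)) [] //.
Qed.

End Basics.

Section Circ.
Variable K : fieldType.
Variable D : K -> Prop.
Hypothesis hD : domain_with_qf D.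

Definition cc (S : {poly K} -> Prop) (E : K -> Prop) (x : K) :=
  exists g, S g /\ forall k, E (x * g`_k).

Lemma tofr_inj (p q : {poly K}) : tofr p = tofr q -> p = q.
Proof. by move=> h; apply/eqP; rewrite -tofrac_eq; apply/eqP. Qed.

Lemma tofrM (p q : {poly K}) : tofr (p * q) = tofr p * tofr q.
Proof. exact: rmorphM. Qed.
Lemma tofrD (p q : {poly K}) : tofr (p + q) = tofr p + tofr q.
Proof. exact: rmorphD. Qed.
Lemma tofr_sum n (F : 'I_n -> {poly K}) : tofr (\sum_i F i) = \sum_i tofr (F i).
Proof. exact: rmorph_sum. Qed.
Lemma tofr0 : tofr (0 : {poly K}) = 0.
Proof. exact: rmorph0. Qed.
Lemma tofr_neq0 (p : {poly K}) : p != 0 -> tofr p != 0.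
Proof. by move=> h; rewrite /tofr tofrac_eq0. Qed.

Lemma fieldid (F : fieldType) (a b c g g' : F) : g' != 0 ->
  (a + b * (c / g')) * (g * g') = (a * g) * g' + b * c * g.
Proof.
move=> nz; rewrite mulrDl mulrA; congr (_ + _).
by rewrite [g * g']mulrC (mulrA (b * (c / g')) g' g) -(mulrA b) divfK.
Qed.

Lemma S_nz S g : multiplicative D S -> S g -> g != 0.
Proof. by case=> _ _ _ h0 Sg; apply/eqP => e; apply: h0; rewrite -e. Qed.

Lemma circE S E x : multiplicative D S -> modE D E -> (circ D S E x <-> cc S E x).
Proof.
move=> hS hE; have [hSD hS1 hSM hS0] := hS; split.
- move=> [n [e [u [hu he]]]].
  suff [g [h [Sg hh eq]]] : exists g (h : {poly K}), [/\ S g, (forall k, E h`_k) &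
      (\sum_(i < n) embK (e i) * u i) * tofr g = tofr h].
    exists g; split=> // k; move: eq; rewrite -he /embK -tofrM => /tofr_inj eq'.
    by move: (hh k); rewrite -eq' coefCM.
  elim: n e u hu {he} => [|n IH] e u hu.
    exists 1, 0; split=> //; last by rewrite big_ord0 mul0r tofr0.
    by move=> k; rewrite coef0; case: hE.
  have [g [h [Sg hh eq]]] := IH e u (fun i hi => hu i (ltnW hi)).
  have [he [f [g' [Df Sg' eu]]]] := hu n (ltnSn n).
  exists (g * g'), (h * g' + (e n)%:P * f * g); split.
  + exact: hSM.
  + move=> k; rewrite coefD; case: (hE) => _ hadd _; apply: hadd.
      rewrite -[_`_k]mul1r; apply: (coefM_mod hE) => a b.
      by rewrite mul1r; exact: (modE_mulr hE (hSD _ Sg' b) (hh a)).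
    rewrite -mulrA coefCM mulrC; case: hE => _ _ hm; apply: hm => //.
    by apply: DX_mul => //; apply: hSD.
  + rewrite big_ord_recr /= eu tofrM fieldid; last by apply: tofr_neq0; apply: S_nz Sg'.
    by rewrite eq tofrD !tofrM /embK.
- move=> [g [Sg hg]].
  have nz : tofr g != 0 by apply: tofr_neq0; apply: S_nz Sg.
  exists (size g), (fun i => x * g`_i), (fun i => tofr 'X^i / tofr g); split.
    move=> i _; split=> //; exists 'X^i, g; split=> //; exact: DXXn.
  have -> : \sum_(i < size g) embK (x * g`_i) * (tofr 'X^i / tofr g) =
            tofr (\sum_(i < size g) (x * g`_i) *: 'X^i) / tofr g.
    rewrite tofr_sum mulr_suml; apply: eq_bigr => i _.
    by rewrite /embK mulrA -tofrM mul_polyC.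
  have -> : \sum_(i < size g) (x * g`_i) *: 'X^i = x%:P * g.
    have e : x *: g = x *: \poly_(i < size g) g`_i by rewrite coefK.
    rewrite mul_polyC e poly_def scaler_sumr; apply: eq_bigr => i _.
    by rewrite scalerA.
  by rewrite tofrM mulfK.
Qed.

Lemma circ0 S E : circ D S E 0.
Proof.
exists 0%N, (fun _ => 0), (fun _ => 0); split=> //.
by rewrite big_ord0 /embK polyC0 tofr0.
Qed.

Lemma modE_scale a E : modE D E -> modE D (scale a E).
Proof.
move=> [h0 h1 h2]; split.
- by exists 0; rewrite mulr0.
- by move=> x y [e [he ->]] [e' [he' ->]]; exists (e + e'); rewrite mulrDr; split=> //; apply: h1.
- by move=> d x hd [e [he ->]]; exists (d * e); rewrite mulrCA; split=> //; apply: h2.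
Qed.

Lemma modE_setI E F : modE D E -> modE D F -> modE D (setI E F).
Proof.
move=> [h0 h1 h2] [k0 k1 k2]; split.
- by split.
- by move=> x y [? ?] [? ?]; split; [apply: h1|apply: k1].
- by move=> d x hd [? ?]; split; [apply: h2|apply: k2].
Qed.

End Circ.

Lemma chain_fin (T : Type) (C : (T -> Prop) -> Prop) (z : T) :
  zchain C -> (exists c, C c) -> (forall c, C c -> c z) ->
  forall n (h : nat -> T), (forall k, (k < n)%N -> zunion C (h k)) ->
  exists c, C c /\ forall k, (k < n)%N -> c (h k).
Proof.
move=> ch [c0 Cc0] hz; elim=> [|n IH] h hh.
  by exists c0.
have [c [Cc hc]] := IH h (fun k hk => hh k (ltnW hk)).
have [c' [Cc' hc']] := hh n (ltnSn n).
case: (ch c c' Cc Cc') => sub1.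
- exists c'; split=> // k; rewrite ltnS leq_eqVlt => /orP [/eqP ->//|hk].
  by apply: sub1; apply: hc.
- exists c; split=> // k; rewrite ltnS leq_eqVlt => /orP [/eqP ->|hk]; last exact: hc.
  by apply: sub1.
Qed.

Section PartF.
Variable K : fieldType.
Variable D : K -> Prop.
Hypothesis hD : domain_with_qf D.

Definition ideal (J : K -> Prop) := sub J D /\ modE D J.

Lemma content_sub g : DX D g -> sub (content D g) D.
Proof. by move=> hg; apply: span_sub; [exact: modE_D | move=> i _; apply: hg]. Qed.

Lemma colonD y : colon D D y <-> D y.
Proof.
split; first by move/(_ 1 (D1 hD)); rewrite mulr1.
by move=> hy e he; apply: DM.
Qed.

Lemma vopD y : vop D D y <-> D y.
Proof.
split; first by move/(_ 1); rewrite mulr1; apply; apply/colonD; apply: D1.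
by move=> hy e /colonD he; apply: DM.
Qed.

Lemma Nv_iff g : DX D g -> g != 0 ->
  (Nstar D (vop D) g <-> forall z, colon D (content D g) z -> D z).
Proof.
move=> hg nz; split.
- move=> [_ _ e] z hz.
  have : vop D (content D g) 1 by apply/e; apply/vopD; apply: D1.
  by move/(_ z hz); rewrite mul1r.
- move=> h; split=> // y; split.
  + move=> hy; apply/vopD; rewrite -[y]mulr1; apply: hy.
    by move=> e he; rewrite mul1r; apply: content_sub he.
  + by move/vopD=> hy e he; apply: DM => //; apply: h.
Qed.

Lemma D_circ S x : multiplicative D S -> D x -> circ D S D x.
Proof.
move=> hS hx; apply/(circE hD _ hS (modE_D hD)); exists 1; split; first by case: hS.
by move=> k; rewrite coef1; apply: DM => //; apply: Dnat.
Qed.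

Lemma f1 S : multiplicative D S ->
  (seteq (circ D S D) D <-> psub S (Nstar D (vop D))).
Proof.
move=> hS; have [hSD _ _ _] := hS; split.
- move=> e g Sg; apply/(Nv_iff (hSD _ Sg) (S_nz hS Sg)) => z /(colon_content hD) hz.
  by apply/(e z); apply: (proj2 (circE hD z hS (modE_D hD))); exists g; split.
- move=> h x; split; last exact: D_circ.
  move/(circE hD _ hS (modE_D hD)) => [g [Sg hg]].
  by apply: (proj1 (Nv_iff (hSD _ Sg) (S_nz hS Sg)) (h _ Sg)); apply/(colon_content hD).
Qed.

Lemma D_DP P x : prime_ideal D P -> D x -> DP D P x.
Proof.
move=> hP hx; exists x, 1; split=> //; [exact: D1 | by case: hP => _ _ _ _ [] | by rewrite divr1].
Qed.

Lemma f2 S : multiplicative D S ->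
  (psub S (Nstar D (vop D)) <-> (forall x, D x <-> (forall P, Nabla D S P -> DP D P x))).
Proof.
move=> hS; have [hSD hS1 hSM hS0] := hS; split; last first.
  move=> hI; apply/(f1 hS) => x; split; last exact: D_circ.
  move/(circE hD _ hS (modE_D hD)) => [g [Sg hg]]; apply/hI => P [[hP hPS] _].
  have [k hk] := not_all_ex_not _ _ (hPS g Sg).
  have nz : g`_k != 0 by apply/eqP => e; apply: hk; rewrite e; case: hP.
  exists (x * g`_k), g`_k; split=> //; first exact: hSD.
  by rewrite mulfK.
move=> hN x; split; first by move=> hx P [[hP _] _]; apply: D_DP.
move=> hx; pose I := fun d => D d /\ D (d * x).
suff [g [Sg hg]] : exists g, S g /\ PX I g.
  have := proj1 (Nv_iff (hSD _ Sg) (S_nz hS Sg)) (hN _ Sg); apply.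
  by apply/(colon_content hD) => k; rewrite mulrC; case: (hg k).
apply: NNPP => hno.
pose Fm := fun J => [/\ ideal J, sub I J & forall g, S g -> ~ PX J g].
have hI : ideal I.
  split; first by move=> d [].
  split.
  - by split; [exact: D0 | rewrite mul0r; exact: D0].
  - by move=> a b [? ?] [? ?]; split; [apply: DD | rewrite mulrDl; apply: DD].
  - by move=> d a hd [? ?]; split; [apply: DM | rewrite -mulrA; apply: DM].
have FI : Fm I.
  by split=> // g Sg hg; apply: hno; exists g.
have Fch : forall C, (forall c, C c -> Fm c) -> zchain C -> (exists c, C c) -> Fm (zunion C).
  move=> C hC ch [c0 Cc0]; split.
  - split; first by move=> y [c [Cc hy]]; have [[hs _] _ _] := hC c Cc; apply: hs.
    split.
    + by exists c0; split=> //; have [[_ [h0 _ _]] _ _] := hC c0 Cc0.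
    + move=> a b [c [Cc ha]] [c' [Cc' hb]].
      case: (ch c c' Cc Cc') => s.
        exists c'; split=> //; have [[_ [_ h1 _]] _ _] := hC c' Cc'; apply: h1 => //; exact: s.
      exists c; split=> //; have [[_ [_ h1 _]] _ _] := hC c Cc; apply: h1 => //; exact: s.
    + move=> d a hd [c [Cc ha]]; exists c; split=> //.
      by have [[_ [_ _ h2]] _ _] := hC c Cc; apply: h2.
  - by move=> y hy; exists c0; split=> //; have [_ h _] := hC c0 Cc0; apply: h.
  - move=> g Sg hg.
    have [c [Cc hc]] := @chain_fin K C 0 ch (ex_intro _ c0 Cc0)
      (fun c Cc => let: And3 (conj _ (And3 h0 _ _)) _ _ := hC c Cc in h0) (size g) (fun k => g`_k)
      (fun k _ => hg k).
    have [[_ [h0 _ _]] _ hcS] := hC c Cc; apply: (hcS g Sg) => k.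
    by case: (ltnP k (size g)) => hk; [apply: hc | rewrite nth_default].
have [M [[[hMD [hM0 hMp hMm]] hIM hMS] [_ hmax]]] := @zorn K Fm I FI Fch.
have hPM : prime_ideal D M.
  split=> //; split.
    by move=> M1; apply: (hMS 1 hS1) => k; rewrite coef1; case: (k == 0%N).
  move=> a b ha hb hab; apply: NNPP => hn.
  have [na nb] : ~ M a /\ ~ M b by split=> h; apply: hn; [left|right].
  pose J1 := fun d => D d /\ M (d * b).
  have hJ1 : ideal J1.
    split; first by move=> d [].
    split.
    - by split; [exact: D0 | rewrite mul0r].
    - by move=> u v [? ?] [? ?]; split; [apply: DD | rewrite mulrDl; apply: hMp].
    - by move=> d u hd [? ?]; split; [apply: DM | rewrite -mulrA; apply: hMm].
  have MJ1 : sub M J1 by move=> d hd; split; [apply: hMD | rewrite mulrC; apply: hMm].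
  have [f [Sf hf]] : exists f, S f /\ PX J1 f.
    apply: NNPP => hno1; apply: na.
    suff : sub J1 M by apply; split.
    apply: (hmax J1 _ MJ1); split=> //; first by move=> d /hIM /MJ1.
    by move=> g Sg hg; apply: hno1; exists g.
  pose J2 := fun d => D d /\ forall k, M (d * f`_k).
  have hJ2 : ideal J2.
    split; first by move=> d [].
    split.
    - by split; [exact: D0 | move=> k; rewrite mul0r].
    - by move=> u v [? hu] [? hv]; split; [apply: DD | move=> k; rewrite mulrDl; apply: hMp].
    - by move=> d u hd [? hu]; split; [apply: DM | move=> k; rewrite -mulrA; apply: hMm].
  have MJ2 : sub M J2.
    move=> d hd; split; first by apply: hMD.
    by move=> k; rewrite mulrC; apply: hMm => //; apply: hSD.
  have [g [Sg hg]] : exists g, S g /\ PX J2 g.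
    apply: NNPP => hno2; apply: nb.
    suff : sub J2 M by apply; split=> // k; rewrite mulrC; case: (hf k).
    apply: (hmax J2 _ MJ2); split=> //; first by move=> d /hIM /MJ2.
    by move=> g Sg hg; apply: hno2; exists g.
  apply: (hMS (g * f) (hSM _ _ Sg Sf)) => m.
  rewrite -[_`_m]mul1r; apply: (coefM_mod (And3 hM0 hMp hMm)) => i j.
  by rewrite mul1r; case: (hg i).
have hNab : Nabla D S M.
  split; first by split.
  move=> Q [hQ hQS] hMQ; apply: hmax => //; split=> //.
  - by split; [move=> y; apply: prime_sub | apply: modE_prime].
  - by move=> d /hIM /hMQ.
have [a [b [ha hb nb ex]]] := hx M hNab.
apply: (nb); apply: hIM; split=> //; rewrite ex.
have nz : b != 0 by apply/eqP => e; apply: nb; rewrite e.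
by rewrite mulrC divfK.
Qed.

End PartF.

Section PartG1.
Variable K : fieldType.
Variable D : K -> Prop.
Hypothesis hD : domain_with_qf D.

Lemma has_nz_poly (g : {poly K}) : g != 0 -> has (fun a => a != 0) g.
Proof.
move=> nz; apply/(has_nthP 0); exists (size g).-1.
  by rewrite prednK // size_poly_gt0.
by move: nz; rewrite -lead_coef_eq0.
Qed.

Lemma PX_zero P (g : {poly K}) : (forall p, P p -> p = 0) -> PX P g -> g = 0.
Proof. by move=> h hg; apply/polyP => k; rewrite coef0; apply: h. Qed.

Lemma cc_prod E x (g h : {poly K}) : modE D E -> (forall k, E (x * g`_k)) -> DX D h ->
  forall m, E (x * (g * h)`_m).
Proof.
move=> hE hg hh; apply: (coefM_mod hE) => a b; exact: (modE_mulr hE (hh b) (hg a)).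
Qed.

Lemma coef1_mul x k : x * (1 : {poly K})`_k = if k == 0%N then x else 0.
Proof. by rewrite coef1; case: (k == 0%N); rewrite ?mulr1 ?mulr0. Qed.

Variable T : {poly K} -> Prop.
Hypothesis hT : multiplicative D T.

Lemma T1 : T 1. Proof. by case: hT. Qed.
Lemma TM f g : T f -> T g -> T (f * g). Proof. by case: hT => _ _ h _; apply: h. Qed.
Lemma TD g : T g -> DX D g. Proof. by case: hT => h _ _ _; apply: h. Qed.

Lemma sub_circ E x : modE D E -> E x -> circ D T E x.
Proof.
move=> hE hx; apply/(circE hD _ hT hE); exists 1; split; first exact: T1.
by move=> k; rewrite coef1_mul; case: (k == 0%N) => //; case: hE.
Qed.

Lemma circ_mod E : modE D E -> modE D (circ D T E).
Proof.
move=> hE; split.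
- exact: circ0.
- move=> x y /(circE hD _ hT hE) [g [Tg hg]] /(circE hD _ hT hE) [h [Th hh]].
  apply/(circE hD _ hT hE); exists (g * h); split; first exact: TM.
  move=> k; rewrite mulrDl; case: (hE) => _ hadd _; apply: hadd.
    exact: (cc_prod hE hg (TD Th)).
  by rewrite [g * h]mulrC; exact: (cc_prod hE hh (TD Tg)).
- move=> d x hd /(circE hD _ hT hE) [g [Tg hg]].
  apply/(circE hD _ hT hE); exists g; split=> // k.
  by rewrite -mulrA; case: hE => _ _ hm; apply: hm.
Qed.

Lemma circ_mono E F : modE D E -> modE D F -> sub E F -> sub (circ D T E) (circ D T F).
Proof.
move=> hE hF s x /(circE hD _ hT hE) [g [Tg hg]].
by apply/(circE hD _ hT hF); exists g; split=> // k; apply: s.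
Qed.

Lemma Fbar_circ E : Fbar D E -> Fbar D (circ D T E).
Proof.
move=> hE; have hm := modE_Fbar hE; apply: fbar_of; first exact: circ_mod.
have [[x [hx nz]] _ _ _] := hE; exists x; split=> //; exact: sub_circ.
Qed.

Lemma g1 : [/\ semistar D (circ D T), stable D (circ D T) & finite_type D (circ D T)].
Proof.
split.
- split.
  + exact: Fbar_circ.
  + move=> a E nz hE; have hm := modE_Fbar hE; have hsm := modE_scale a hm.
    move=> y; split.
    * move/(circE hD _ hT hsm) => [g [Tg hg]].
      exists (y / a); split; last by rewrite mulrC divfK.
      apply/(circE hD _ hT hm); exists g; split=> // k.
      have [e [he ee]] := hg k.
      by rewrite mulrAC ee mulrC mulKf.
    * move=> [z [hz ->]]; move: hz => /(circE hD _ hT hm) [g [Tg hg]].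
      apply/(circE hD _ hT hsm); exists g; split=> // k.
      by exists (z * g`_k); split=> //; rewrite mulrA.
  + move=> E F hE hF s; apply: circ_mono => //; exact: modE_Fbar.
  + move=> E hE x; apply: sub_circ; exact: modE_Fbar.
  + move=> E hE; have hm := modE_Fbar hE; have hcm := circ_mod hm.
    move=> x; split; last by apply: sub_circ.
    move/(circE hD _ hT hcm) => [g [Tg hg]].
    have [h [Th hh]] : exists h, T h /\ forall k, (k < size g)%N -> forall j, E (x * g`_k * h`_j).
      elim: (size g) => [|n [h [Th hh]]]; first by exists 1; split=> //; exact: T1.
      have [h' [Th' hh']] := proj1 (circE hD _ hT hm) (hg n).
      exists (h * h'); split; first exact: TM.
      move=> k; rewrite ltnS leq_eqVlt => /orP [/eqP ->|hk] j.
        by rewrite [h * h']mulrC; exact: (cc_prod hm hh' (TD Th) j).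
      exact: (cc_prod hm (hh k hk) (TD Th') j).
    apply/(circE hD _ hT hm); exists (g * h); split; first exact: TM.
    apply: (coefM_mod hm) => a b.
    case: (ltnP a (size g)) => ha; first exact: hh.
    by rewrite nth_default // mulr0 mul0r; case: hm.
- move=> E F hE hF; have hmE := modE_Fbar hE; have hmF := modE_Fbar hF.
  have hmI := modE_setI hmE hmF.
  move=> x; split.
  + move=> hx; split; apply: (circ_mono hmI) hx => //; by move=> y [].
  + move=> [/(circE hD _ hT hmE) [g [Tg hg]] /(circE hD _ hT hmF) [h [Th hh]]].
    apply/(circE hD _ hT hmI); exists (g * h); split; first exact: TM.
    move=> k; split; first exact: (cc_prod hmE hg (TD Th) k).
    by rewrite [g * h]mulrC; exact: (cc_prod hmF hh (TD Tg) k).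
- move=> E hE; have hm := modE_Fbar hE; move=> x; split; last first.
    move=> [F [hF sFE hx]]; move: hx; apply: circ_mono => //.
    exact: modE_Fbar (Fbar_fg hD hF).
  move=> hx; have [[e [he nz]] _ _ _] := hE.
  have [->|nx] := eqVneq x 0.
    exists (span D [:: e]); split.
    + by exists [:: e]; split=> //=; rewrite nz.
    + by apply: span_sub => // i; rewrite ltnS leqn0 => /eqP ->.
    + exact: circ0.
  move: hx => /(circE hD _ hT hm) [g [Tg hg]].
  have gnz : g != 0 := S_nz hT Tg.
  exists (span D (map (fun c => x * c) g)); split.
  + exists (map (fun c => x * c) g); split=> //.
    apply/(has_nthP 0); exists (size g).-1.
      by rewrite size_map prednK // size_poly_gt0.
    rewrite (nth_map 0); last by rewrite prednK // size_poly_gt0.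
    by rewrite mulf_neq0 // -/(lead_coef g) lead_coef_eq0.
  + apply: span_sub => // i; rewrite size_map => hi.
    by rewrite (nth_map 0).
  + apply/(circE hD _ hT (span_mod hD _)); exists g; split=> // k.
    case: (ltnP k (size g)) => hk.
      rewrite -(nth_map 0 0 (fun c => x * c) hk); apply: span_nth => //.
      by rewrite size_map.
    by rewrite nth_default // mulr0; case: (span_mod hD (map (fun c => x * c) g)).
Qed.

End PartG1.

Section PartG2.
Variable K : fieldType.
Variable D : K -> Prop.
Hypothesis hD : domain_with_qf D.

Lemma inj_half T1 T2 : multiplicative D T1 -> multiplicative D T2 -> ext_saturated D T2 ->
  star_eq D (circ D T1) (circ D T2) -> psub T1 T2.
Proof.
move=> h1 h2 s2 heq g Tg; apply/s2; split; first by case: h1 => h _ _ _; apply: h.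
move=> P [hP hPT] hPg.
have [[p [Pp pnz]]|nop] := classic (exists p, P p /\ p != 0); last first.
  have g0 : g = 0.
    apply: (PX_zero _ hPg) => p Pp; apply: NNPP => hn; apply: nop; exists p; split=> //.
    by apply/eqP.
  by case: h1 => _ _ _ h0; apply: h0; rewrite -g0.
have [hPD hP0 hPp hPm [nP1 hpr]] := hP.
pose E := fun y => exists a b, [/\ P a, D b, ~ P b & y = a / b].
have nzb : forall b, ~ P b -> b != 0 by move=> b nb; apply/eqP => e; apply: nb; rewrite e.
have hE : Fbar D E.
  split.
  - by exists p; split=> //; exists p, 1; split=> //; [exact: D1 | rewrite divr1].
  - by exists 0, 1; split=> //; [exact: D1 | rewrite mul0r].
  - move=> y z [a [b [Pa Db nb ->]]] [a' [b' [Pa' Db' nb' ->]]].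
    exists (a * b' + a' * b), (b * b'); split.
    + by apply: hPp; rewrite mulrC; apply: hPm.
    + exact: DM.
    + by case/hpr.
    + by rewrite addf_div //; apply: nzb.
  - move=> d y hd [a [b [Pa Db nb ->]]]; exists (d * a), b; split=> //.
    + exact: hPm.
    + by rewrite mulrA.
have : circ D T1 E 1.
  apply/(circE hD _ h1 (modE_Fbar hE)); exists g; split=> // k.
  by exists g`_k, 1; rewrite mul1r divr1; split=> //; exact: D1.
move/(heq E hE)/(circE hD _ h2 (modE_Fbar hE)) => [h [Th hh]].
have [k hk] := not_all_ex_not _ _ (hPT h Th).
have [a [b [Pa Db nb e]]] := hh k; rewrite mul1r in e.
have hkD : D h`_k by case: h2 => hd _ _ _; apply: hd.
have : P (h`_k * b) by rewrite e divfK //; apply: nzb.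
by case/hpr.
Qed.

End PartG2.

Section PartG3.
Variable K : fieldType.
Variable D : K -> Prop.
Hypothesis hD : domain_with_qf D.
Variable star : (K -> Prop) -> (K -> Prop).
Hypothesis hss : semistar D star.
Hypothesis hst : stable D star.
Hypothesis hft : finite_type D star.

Lemma st_F E : Fbar D E -> Fbar D (star E). Proof. by case: hss => h _ _ _ _; apply: h. Qed.
Lemma st_sc x E : x != 0 -> Fbar D E -> seteq (star (scale x E)) (scale x (star E)).
Proof. by case: hss => _ h _ _ _; apply: h. Qed.
Lemma st_mon E F : Fbar D E -> Fbar D F -> sub E F -> sub (star E) (star F).
Proof. by case: hss => _ _ h _ _; apply: h. Qed.
Lemma st_ext E : Fbar D E -> sub E (star E). Proof. by case: hss => _ _ _ h _; apply: h. Qed.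
Lemma st_id E : Fbar D E -> seteq (star (star E)) (star E).
Proof. by case: hss => _ _ _ _ h; apply: h. Qed.

Lemma st_eq E F : Fbar D E -> Fbar D F -> seteq E F -> seteq (star E) (star F).
Proof.
move=> hE hF e x; split; apply: st_mon => // y; by move/e.
Qed.

Lemma Fbar_ext E F : Fbar D E -> seteq E F -> Fbar D F.
Proof.
move=> hE e; have [[x [hx nz]] _ _ _] := hE; apply: fbar_of.
  exact: modE_ext (modE_Fbar hE) e.
by exists x; split=> //; apply/e.
Qed.

Lemma cancel1 (a q : K) : q != 0 -> q * (a / q) = a.
Proof. by move=> h; rewrite mulrC divfK. Qed.

Lemma Fbar_scale x E : x != 0 -> Fbar D E -> Fbar D (scale x E).
Proof.
move=> nz hE; have [[e [he ne]] _ _ _] := hE; apply: fbar_of.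
  exact: modE_scale (modE_Fbar hE).
by exists (x * e); split; [exists e | rewrite mulf_neq0].
Qed.

Lemma Fbar_colon x F : x != 0 -> Fbar D F -> Fbar D (fun d => D d /\ F (d * x)).
Proof.
move=> nx hF; have [h0 h1 h2] := modE_Fbar hF; apply: fbar_of.
  split.
  - by split; [exact: D0 | rewrite mul0r].
  - by move=> u v [? ?] [? ?]; split; [apply: DD | rewrite mulrDl; apply: h1].
  - by move=> d u hd [? ?]; split; [apply: DM | rewrite -mulrA; apply: h2].
have [[e [he ne]] _ _ _] := hF.
case: hD => _ _ _ _ hq.
have [a [b [Da Db bnz ea]]] := hq e.
have [p [q [Dp Dq qnz ex]]] := hq x.
have anz : a != 0 by apply: contra ne => /eqP a0; rewrite ea a0 mul0r.
have pnz : p != 0 by apply: contra nx => /eqP p0; rewrite ex p0 mul0r.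
exists (q * a); split; last by rewrite mulf_neq0.
split; first exact: DM.
have -> : q * a * x = (p * b) * e.
  by rewrite ex ea [q * a]mulrC -mulrA cancel1 // -mulrA cancel1 // mulrC.
by apply: h2 => //; apply: DM.
Qed.

Lemma Fbar_D : Fbar D D.
Proof.
apply: fbar_of; first exact: modE_D.
by exists 1; split; [exact: D1 | exact: oner_neq0].
Qed.

Lemma lem_i x F : x != 0 -> Fbar D F -> star (fun d => D d /\ F (d * x)) 1 -> star F x.
Proof.
move=> nx hF h1.
have hI := Fbar_colon nx hF.
have hsI := Fbar_scale nx hI.
apply: (st_mon hsI hF).
  by move=> y [d [[hd hdx] ->]]; rewrite mulrC.
by apply/(st_sc nx hI); exists 1; rewrite mulr1.
Qed.

Lemma lem_ii x F : x != 0 -> Fbar D F -> star F x -> star (fun d => D d /\ F (d * x)) 1.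
Proof.
move=> nx hF hx.
have hI := Fbar_colon nx hF.
have hsI := Fbar_scale nx hI.
have hX := Fbar_scale nx Fbar_D.
have e : seteq (Defs.setI (scale x D) F) (scale x (fun d => D d /\ F (d * x))).
  move=> y; split.
  - by move=> [[d [hd ->]] hy]; exists d; split=> //; split=> //; rewrite mulrC.
  - by move=> [d [[hd hdx] ->]]; split; [exists d | rewrite mulrC].
have hXF := Fbar_ext hsI (fun y => iff_sym (e y)).
have : star (Defs.setI (scale x D) F) x.
  apply/(hst hX hF); split=> //; apply: st_ext => //.
  by exists 1; split; [exact: D1 | rewrite mulr1].
move/(st_eq hXF hsI e)/(st_sc nx hI) => [e1 [he1 ee]].
suff -> : 1 = e1 by [].
by apply: (mulfI nx); rewrite mulr1.
Qed.

Definition Tst : {poly K} -> Prop := fun g => [/\ DX D g, g != 0 &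
  forall P, prime_ideal D P -> (exists p, P p /\ p != 0) -> ~ star P 1 -> ~ PX P g].

Lemma Fbar_prime P : prime_ideal D P -> (exists p, P p /\ p != 0) -> Fbar D P.
Proof. by move=> hP [p [Pp nz]]; apply: fbar_of; [exact: modE_prime | exists p]. Qed.

Lemma T_Poly s : (forall i, (i < size s)%N -> D s`_i) -> has (fun a => a != 0) s ->
  star (span D s) 1 -> Tst (Poly s).
Proof.
move=> hs hnz h1; split.
- move=> i; rewrite coef_Poly; case: (ltnP i (size s)) => hi; first exact: hs.
  by rewrite nth_default //; exact: D0.
- move: hnz => /(has_nthP 0) [i hi nz]; apply: contra nz => /eqP e.
  by rewrite -coef_Poly e coef0.
- move=> P hP hPnz nP hPX; apply: nP.
  apply: (st_mon (Fbar_span hD hnz) (Fbar_prime hP hPnz)) h1.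
  apply: span_sub; first exact: modE_prime.
  by move=> i hi; rewrite -coef_Poly.
Qed.

Lemma T_mult : multiplicative D Tst.
Proof.
split.
- by move=> g [].
- split; [exact: DX1 | exact: oner_neq0 | ].
  move=> P hP _ _ h1; have := h1 0%N; rewrite coef1 /=.
  by case: hP => _ _ _ _ [].
- move=> f g [hf fnz hfP] [hg gnz hgP]; split.
  + exact: DX_mul.
  + exact: mulf_neq0.
  + move=> P hP hPnz nP hfg.
    by case: (gauss hD hP hf hg hfg); [apply: hfP | apply: hgP].
- by move=> [_ /eqP].
Qed.

Lemma zero_prime : prime_ideal D (fun x => x = 0).
Proof.
split.
- by move=> x ->; exact: D0.
- by [].
- by move=> x y -> ->; rewrite addr0.
- by move=> d x _ ->; rewrite mulr0.
- split; first by move=> e; move: (@oner_neq0 K); rewrite e eqxx.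
  by move=> x y _ _ /eqP; rewrite mulf_eq0 => /orP [] /eqP; [left|right].
Qed.

Lemma T_sat : ext_saturated D Tst.
Proof.
move=> g; split.
- move=> Tg; have [hg gnz hgP] := Tg; split=> // P [hP hPT] hPg.
  have [hnz|hz] := classic (exists p, P p /\ p != 0); last first.
    have g0 : g = 0.
      apply: PX_zero hPg => p Pp; apply: NNPP => hn.
      by apply: hz; exists p; split=> //; apply/eqP.
    by move: gnz; rewrite g0 eqxx.
  apply: (hgP P hP hnz) hPg => h1.
  have hFP := Fbar_prime hP hnz.
  have [F [[s [es hs]] sFP hF1]] := proj1 (hft hFP 1) h1.
  have hFs := Fbar_span hD hs.
  have hF := Fbar_ext hFs (fun y => iff_sym (es y)).
  have hsP : forall i, (i < size s)%N -> P s`_i.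
    by move=> i hi; apply: sFP; apply/es; apply: span_nth.
  have Ts : Tst (Poly s).
    apply: T_Poly => //.
      by move=> i hi; apply: prime_sub hP _; apply: hsP.
    by apply/(st_eq hF hFs es).
  apply: (hPT _ Ts) => i; rewrite coef_Poly.
  case: (ltnP i (size s)) => hi; first exact: hsP.
  by rewrite nth_default //; case: hP.
- move=> [hg hgP]; split=> //.
  + apply/eqP => g0; apply: (hgP (fun x => x = 0)); last by rewrite g0 => k; rewrite coef0.
    split; first exact: zero_prime.
    move=> h [_ hnz _] hh.
    by move: hnz; rewrite (PX_zero (fun p (e : p = 0) => e) hh) eqxx.
  + move=> P hP hPnz nP; apply: hgP; split=> //.
    by move=> h [_ _ hh]; apply: hh.
Qed.

Lemma K1 g : Tst g -> star (content D g) 1.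
Proof.
move=> Tg; have [hg gnz hgP] := Tg.
have hcF : Fbar D (content D g) := Fbar_span hD (has_nz_poly gnz).
have [[c0 [hc0 c0nz]] _ _ _] := hcF.
apply: NNPP => hno.
pose Fm := fun J => [/\ ideal D J, sub (content D g) J & ~ star J 1].
have FbarFm : forall J, Fm J -> Fbar D J.
  move=> J [[_ hJ] hcJ _]; apply: fbar_of => //; exists c0; split=> //; exact: hcJ.
have Fc : Fm (content D g).
  split=> //; split; [exact: content_sub | exact: span_mod].
have Fch : forall C, (forall c, C c -> Fm c) -> zchain C -> (exists c, C c) -> Fm (zunion C).
  move=> C hC ch [c1 Cc1].
  have hU : ideal D (zunion C).
    split; first by move=> y [c [Cc hy]]; have [[hs _] _ _] := hC c Cc; apply: hs.
    split.
    + by exists c1; split=> //; have [[_ [h0 _ _]] _ _] := hC c1 Cc1.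
    + move=> a b [c [Cc ha]] [c' [Cc' hb]].
      case: (ch c c' Cc Cc') => s.
        exists c'; split=> //; have [[_ [_ h1 _]] _ _] := hC c' Cc'; apply: h1 => //; exact: s.
      exists c; split=> //; have [[_ [_ h1 _]] _ _] := hC c Cc; apply: h1 => //; exact: s.
    + move=> d a hd [c [Cc ha]]; exists c; split=> //.
      by have [[_ [_ _ h2]] _ _] := hC c Cc; apply: h2.
  have hcU : sub (content D g) (zunion C).
    by move=> y hy; exists c1; split=> //; have [_ h _] := hC c1 Cc1; apply: h.
  split=> // hU1.
  have hUF : Fbar D (zunion C).
    by apply: fbar_of; [case: hU | exists c0; split=> //; apply: hcU].
  have [F [[s [es hs]] sFU hF1]] := proj1 (hft hUF 1) hU1.
  have hFs := Fbar_span hD hs.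
  have hF := Fbar_ext hFs (fun y => iff_sym (es y)).
  have [c [Cc hc]] := @chain_fin K C 0 ch (ex_intro _ c1 Cc1)
      (fun c Cc => let: And3 (conj _ (And3 h0 _ _)) _ _ := hC c Cc in h0) (size s) (fun k => s`_k)
      (fun k hk => sFU _ (proj2 (es _) (span_nth hD hk))).
  have [[_ hmc] _ nc] := hC c Cc; apply: nc.
  apply: (st_mon hF (FbarFm c (hC c Cc))) hF1.
  move=> y /es; apply: span_sub => //.
have [M [FM [_ hmax]]] := @zorn K Fm (content D g) Fc Fch.
have hMF := FbarFm M FM.
have [[hMD hMm] hcM nM] := FM.
have [hM0 hMp hMmul] := hMm.
have hMnz : exists p, M p /\ p != 0 by exists c0; split=> //; apply: hcM.
have hPM : prime_ideal D M.
  split=> //; split.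
    by move=> M1; apply: nM; apply: st_ext.
  move=> a b ha hb hab; apply: NNPP => hn.
  have [na nb] : ~ M a /\ ~ M b by split=> h; apply: hn; [left|right].
  have bnz : b != 0 by apply/eqP => e; apply: nb; rewrite e.
  pose J1 := fun d => D d /\ M (d * b).
  have MJ1 : sub M J1 by move=> d hd; split; [apply: hMD | rewrite mulrC; apply: hMmul].
  have hJ1 : ideal D J1.
    split; first by move=> d [].
    exact: modE_Fbar (Fbar_colon bnz hMF).
  have sJ1 : star J1 1.
    apply: NNPP => hn1; apply: na.
    suff : sub J1 M by apply; split.
    apply: (hmax J1 _ MJ1); split=> //; first by move=> d /hcM /MJ1.
  have sMb : star M b := lem_i bnz hMF sJ1.
  have hsM := st_F hMF.
  pose J2 := fun d => D d /\ star M d.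
  have MJ2 : sub M J2 by move=> d hd; split; [apply: hMD | apply: st_ext].
  have hJ2 : ideal D J2.
    split; first by move=> d [].
    have [h0 h1 h2] := modE_Fbar hsM.
    split.
    - by split; [exact: D0 |].
    - by move=> u v [? ?] [? ?]; split; [apply: DD | apply: h1].
    - by move=> d u hd [? ?]; split; [apply: DM | apply: h2].
  have hJ2F : Fbar D J2.
    by apply: fbar_of; [case: hJ2 | exists c0; split=> //; apply: MJ2; apply: hcM].
  have sJ2 : star J2 1.
    apply: NNPP => hn2; apply: nb.
    suff : sub J2 M by apply; split.
    apply: (hmax J2 _ MJ2); split=> //; first by move=> d /hcM /MJ2.
  apply: nM; apply/(st_id hMF).
  apply: (st_mon hJ2F hsM) sJ2.
  by move=> y [].
apply: (hgP M hPM hMnz nM) => k; apply: hcM; exact: content_coef.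
Qed.

Lemma T_eq : star_eq D (circ D Tst) star.
Proof.
move=> E hE; have hm := modE_Fbar hE; move=> x; split.
- move/(circE hD _ T_mult hm) => [g [Tg hg]].
  have [->|nx] := eqVneq x 0; first by case: (st_F hE).
  have hcF : Fbar D (content D g) := Fbar_span hD (has_nz_poly (S_nz T_mult Tg)).
  have hsc := Fbar_scale nx hcF.
  apply: (st_mon hsc hE).
    move=> y [e [he ->]]; move: e he; apply: span_sub.
      split; first by rewrite mulr0; case: hm.
        by move=> u v hu hv; rewrite mulrDr; case: hm => _ h _; apply: h.
      by move=> d u hd hu; rewrite mulrCA; case: hm => _ _ h; apply: h.
    by move=> i _; apply: hg.
  by apply/(st_sc nx hcF); exists 1; split; [apply: K1 | rewrite mulr1].
- move=> hx; have [->|nx] := eqVneq x 0; first exact: circ0.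
  have hI := Fbar_colon nx hE.
  have h1 := lem_ii nx hE hx.
  have [F [[s [es hs]] sFI hF1]] := proj1 (hft hI 1) h1.
  have hFs := Fbar_span hD hs.
  have hF := Fbar_ext hFs (fun y => iff_sym (es y)).
  have hsI : forall i, (i < size s)%N -> D s`_i /\ E (s`_i * x).
    by move=> i hi; apply: sFI; apply/es; apply: span_nth.
  have Ts : Tst (Poly s).
    apply: T_Poly => //; first by move=> i /hsI [].
    by apply/(st_eq hF hFs es).
  apply/(circE hD _ T_mult hm); exists (Poly s); split=> // k.
  rewrite coef_Poly; case: (ltnP k (size s)) => hk.
    by rewrite mulrC; case: (hsI k hk).
  by rewrite nth_default // mulr0; case: hm.
Qed.

End PartG3.

Section PartH.
Variable K : fieldType.
Variable D : K -> Prop.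
Hypothesis hD : domain_with_qf D.

Lemma frac_eq (g n f : {poly K}) : g != 0 -> n != 0 ->
  tofr 1 / tofr g = tofr f / tofr n -> n = f * g.
Proof.
move=> gz nz /eqP; rewrite eqr_div ?tofr_neq0 // -!tofrM mul1r => /eqP.
exact: tofr_inj.
Qed.

Lemma h_dir S : multiplicative D S -> ext_saturated D S ->
  (forall u, locS D (Nstar D (vop D)) u <-> locS D S u) -> pseteq S (Nstar D (vop D)).
Proof.
move=> hS hsat hNa g; have [hSD _ _ _] := hS; split.
- move=> Sg; have gnz := S_nz hS Sg; have hgD := hSD _ Sg.
  have : locS D S (tofr 1 / tofr g) by exists 1, g; split=> //; exact: DX1.
  move/hNa => [f [n [Df Nn e]]]; have [hnD nnz _] := Nn.
  have en := frac_eq gnz nnz e.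
  apply/(Nv_iff hD hgD gnz) => z hz.
  apply: (proj1 (Nv_iff hD hnD nnz) Nn z); apply/(colon_content hD) => m.
  rewrite en [f * g]mulrC; apply: (coefM_mod (modE_D hD)) => a b.
  apply: (DM hD); last exact: Df.
  by move: hz => /(colon_content hD).
- move=> Ng; have [hgD gnz _] := Ng.
  have : locS D (Nstar D (vop D)) (tofr 1 / tofr g) by exists 1, g; split=> //; exact: DX1.
  move/hNa => [f [s [Df Ss e]]].
  have es := frac_eq gnz (S_nz hS Ss) e.
  apply/hsat; split=> // P [hP hPS] hPg.
  apply: (hPS s Ss); rewrite es mulrC; exact: (PX_mulr (modE_prime hP) hPg Df).
Qed.

End PartH.

Theorem theorem2p1 (K : fieldType) (D : K -> Prop) (hD : domain_with_qf D)
  (S : {poly K} -> Prop) (hS : multiplicative D S) :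
  (* (f) *)
  ((seteq (circ D S D) D <-> psub S (Nstar D (vop D))) /\
   (psub S (Nstar D (vop D)) <->
      (forall x, D x <-> (forall P, Nabla D S P -> DP D P x)))) /\
  (* (g) *)
  ((forall T, multiplicative D T -> ext_saturated D T ->
      [/\ semistar D (circ D T), stable D (circ D T) & finite_type D (circ D T)]) /\
   (forall T1 T2, multiplicative D T1 -> ext_saturated D T1 ->
      multiplicative D T2 -> ext_saturated D T2 ->
      star_eq D (circ D T1) (circ D T2) -> pseteq T1 T2) /\
   (forall star, semistar D star -> stable D star -> finite_type D star ->
      exists T, [/\ multiplicative D T, ext_saturated D T & star_eq D (circ D T) star]) /\
   (forall T, multiplicative D T -> ext_saturated D T -> psub T (Nstar D (vop D)) ->
      semistar_star D (circ D T)) /\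
   (forall star, semistar_star D star -> stable D star -> finite_type D star ->
      exists T, [/\ multiplicative D T, ext_saturated D T,
                    psub T (Nstar D (vop D)) & star_eq D (circ D T) star])) /\
  (* (h) *)
  (ext_saturated D S ->
     ((forall u, Na D (vop D) u <-> locS D S u) <-> pseteq S (Nstar D (vop D)))).
Proof.
split.
  split; [exact: (f1 hD hS) | exact: (f2 hD hS)].
split.
  split.
    by move=> T hT _; apply: (g1 hD hT).
  split.
    move=> T1 T2 h1 s1 h2 s2 heq g; split; first exact: (inj_half hD h1 h2 s2 heq).
    apply: (inj_half hD h2 h1 s1) => E hE y; exact: iff_sym (heq E hE y).
  split.
    move=> star hs hst hft; exists (Tst D star); split.
    - exact: (T_mult hD).
    - exact: (T_sat hD hs hft).
    - exact: (T_eq hD hs hst hft).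
  split.
    move=> T hT _ hN; split; first by case: (g1 hD hT).
    by apply/(f1 hD hT).
  move=> star [hs hDD] hst hft; exists (Tst D star); split.
  - exact: (T_mult hD).
  - exact: (T_sat hD hs hft).
  - apply/(f1 hD (T_mult hD star)) => y.
    apply: (iff_trans (T_eq hD hs hst hft (Fbar_D hD) y)); exact: hDD.
  - exact: (T_eq hD hs hst hft).
move=> hsat; split; first exact: (h_dir hD hS hsat).
move=> pe u; split.
- by move=> [f [g [hf hg e]]]; exists f, g; split=> //; apply/pe.
- by move=> [f [g [hf hg e]]]; exists f, g; split=> //; apply/pe.
Qed.
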